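(* There are constants $c,\beta\ge 0$ such that for all sufficiently large $n$ and every integer $k>\frac{4}{7}n+c$, the pair $(n,k)$ is $(2,\beta)$-approx good.
   Context: All graphs are undirected and unweighted. For a graph $G=(V,E)$ and integer $k$, a $k$-spanner of $G$ is a subgraph $H=(V,E')$, $E'\subseteq E$, with $\mathrm{dist}_H(u,v)\le k\cdot\mathrm{dist}_G(u,v)$ for all $u,v\in V$. Girth = length of a shortest cycle ($+\infty$ if acyclic). For constants $\alpha>1,\beta\ge 0$, a pair $(n,k)$ is $(\alpha,\beta)$-approx good if every connected $n$-vertex graph $G$ has a $k$-spanner $H=(V,E_H)$ with girth at least $k+2$ such that $|E_H|-n\le \alpha(\mathsf{OPT}-n)+\beta$, where $\mathsf{OPT}$ is the number of edges of a minimum (fewest-edge) $k$-spanner of $G$. *)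

(* Defs.v *)
From mathcomp Require Import all_boot all_order all_algebra.
Set Implicit Arguments. Unset Strict Implicit. Unset Printing Implicit Defensive.
Import Order.TTheory GRing.Theory Num.Theory.

Section Graphs.
Variable n : nat.
Implicit Types G H : rel 'I_n.

Definition simple_graph G := symmetric G /\ irreflexive G.

Definition connected_graph G := forall u v : 'I_n, connect G u v.

Definition subgraph H G := symmetric H /\ subrel H G.

Definition nedges G : nat :=
  #|[set p : 'I_n * 'I_n | (p.1 < p.2)%N && G p.1 p.2]|.

Definition walk_len G (u v : 'I_n) (d : nat) :=
  exists p : seq 'I_n, [/\ size p = d, path G u p & last u p = v].

Definition is_dist G (u v : 'I_n) (d : nat) :=
  walk_len G u v d /\ forall d', walk_len G u v d' -> (d <= d')%N.

(* dist_H(u,v) <= k dist_G(u,v) for all u,v (with dist = +oo when no walk) *)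
Definition is_spanner G H (k : nat) :=
  subgraph H G /\
  forall u v d, is_dist G u v d -> exists d', is_dist H u v d' /\ (d' <= k * d)%N.

Definition is_graph_cycle H (c : seq 'I_n) := [/\ uniq c, (3 <= size c)%N & cycle H c].

(* girth(H) >= g  (vacuous if acyclic, girth = +oo) *)
Definition girth_ge H (g : nat) :=
  forall c, is_graph_cycle H c -> (g <= size c)%N.

Definition is_opt G (k m : nat) :=
  (exists H, is_spanner G H k /\ nedges H = m) /\
  forall H, is_spanner G H k -> (m <= nedges H)%N.

End Graphs.

Local Open Scope ring_scope.

Definition approx_good (alpha beta : rat) (n k : nat) :=
  forall G : rel 'I_n, simple_graph G -> connected_graph G ->
  exists H : rel 'I_n, [/\ is_spanner G H k, girth_ge H k.+2 &
    forall opt, is_opt G k opt ->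
      (nedges H)%:R - n%:R <= alpha * (opt%:R - n%:R) + beta].

(* Main.v *)
Require Import Defs.
From mathcomp Require Import all_boot all_order all_algebra.
From mathcomp Require Import zify lra.
From Stdlib Require Import Classical.
Import Order.TTheory GRing.Theory Num.Theory.
Set Implicit Arguments. Unset Strict Implicit. Unset Printing Implicit Defensive.

Lemma nat_min (P : nat -> Prop) m0 : P m0 -> exists m, P m /\ forall m', P m' -> (m <= m')%N.
Proof.
move=> H0; apply: NNPP => Hn.
have H : forall m j, (j <= m)%N -> ~ P j.
  elim=> [|m IH] j Hj Pj.
    apply: Hn; exists j; split=> // m' _; lia.
  apply: Hn; exists j; split=> // m' Pm'; rewrite leqNgt; apply/negP => lt.
  by apply: (IH m') => //; lia.
exact: (H m0 m0 (leqnn _) H0).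
Qed.

Lemma nat_max (P : nat -> Prop) B m0 : P m0 -> (forall m, P m -> (m <= B)%N) ->
  exists m, P m /\ forall m', P m' -> (m' <= m)%N.
Proof.
move=> H0 HB.
have [m [[j [Pj ->]] Hm]] := @nat_min (fun m => exists j, P j /\ m = B - j) (B - m0)
  (ex_intro _ m0 (conj H0 erefl)).
exists j; split=> // m' Pm'.
have := Hm (B - m') (ex_intro _ m' (conj Pm' erefl)).
have := HB _ Pj; have := HB _ Pm'; lia.
Qed.

Lemma fin_max (T : finType) (P : T -> Prop) (f : T -> nat) x0 : P x0 ->
  exists x, P x /\ forall y, P y -> (f y <= f x)%N.
Proof.
move=> H0.
have HB : forall m, (exists x, P x /\ f x = m) -> (m <= \max_x f x)%N.
  by move=> m [x [_ <-]]; apply: leq_bigmax.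
have [m [[x [Px <-]] Hm]] := @nat_max (fun m => exists x, P x /\ f x = m) (\max_x f x) (f x0)
  (ex_intro _ x0 (conj H0 erefl)) HB.
exists x; split=> // y Py; exact: Hm (ex_intro _ y (conj Py erefl)).
Qed.

Section Walks.
Variable n : nat.
Implicit Types G H : rel 'I_n.

Lemma walk_nil H u : walk_len H u u 0.
Proof. by exists [::]. Qed.

Lemma walk_edge H u v : H u v -> walk_len H u v 1.
Proof. by move=> huv; exists [:: v]; rewrite /= huv. Qed.

Lemma walk_cat H u w v d1 d2 : walk_len H u w d1 -> walk_len H w v d2 ->
  walk_len H u v (d1 + d2).
Proof.
move=> [p1 [s1 h1 l1]] [p2 [s2 h2 l2]]; exists (p1 ++ p2).
by rewrite size_cat cat_path last_cat l1 h1 h2 s1 s2.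
Qed.

Lemma walk_rev H u v d : symmetric H -> walk_len H u v d -> walk_len H v u d.
Proof.
move=> sH [p [s h l]]; exists (rev (belast u p)); split.
- by rewrite size_rev size_belast.
- rewrite -l rev_path; apply: sub_path h => x y /=; by rewrite sH.
- case: p s h l => [|x p] s h l /=; first by rewrite -l.
  by rewrite rev_cons last_rcons.
Qed.

Lemma walk_dist H u v d : walk_len H u v d -> exists d', is_dist H u v d' /\ (d' <= d)%N.
Proof.
move=> w; have [m [wm Hm]] := @nat_min (walk_len H u v) d w.
by exists m; split=> //; apply: Hm.
Qed.

Lemma spanner_of_edges G H k : subgraph H G ->
  (forall u v, G u v -> exists d, (d <= k)%N /\ walk_len H u v d) -> is_spanner G H k.
Proof.
move=> sHG He; split=> // u v d [[p [s h l]] _].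
suff [d1 [le w]] : exists d1, (d1 <= k * size p)%N /\ walk_len H u (last u p) d1.
  have [d' [D le']] := walk_dist w; exists d'; split; first by rewrite -l.
  by rewrite -s; apply: leq_trans le.
elim: p u {s l} h => [|x p IH] u /=; first by exists 0; split=> //; apply: walk_nil.
move=> /andP[gux hp]; have [d2 [le2 w2]] := IH _ hp.
have [d1 [le1 w1]] := He _ _ gux.
exists (d1 + d2); split; last exact: walk_cat w1 w2.
rewrite mulnS; exact: leq_add.
Qed.

End Walks.

Lemma last_neq (T : eqType) (x : T) p : (1 <= size p)%N -> x \notin p -> last x p != x.
Proof.
case: p => [//|y q] _ xp; apply/eqP => e; move: xp; rewrite -{1}e /=.
by rewrite mem_last.
Qed.

Section AddEdge.
Variable n : nat.
Implicit Types G H : rel 'I_n.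

Definition addE H (u v : 'I_n) : rel 'I_n :=
  fun a b => H a b || ((a == u) && (b == v)) || ((a == v) && (b == u)).

Lemma addE_sub H u v : {in predC1 u &, subrel (addE H u v) H}.
Proof.
move=> a b /= au bu; rewrite /addE (negbTE au) (negbTE bu) /=.
by rewrite andbF !orbF.
Qed.

Lemma cycle_add H u v c : u != v -> is_graph_cycle (addE H u v) c ->
  is_graph_cycle H c \/
  exists d, (d < size c)%N /\ (walk_len H u v d \/ walk_len H v u d).
Proof.
move=> uv [uc sc cc].
case: (boolP (u \in c)) => uinc; last first.
  left; split=> //; apply: (sub_in_cycle (@addE_sub H u v)) cc.
  apply/allP=> x xc /=; apply/eqP=> e; move: uinc; by rewrite -e xc.
case: (rot_to uinc) => i p e.
have uc' : uniq (u :: p) by rewrite -e rot_uniq.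
have sc' : size (u :: p) = size c by rewrite -e size_rot.
have cc' : cycle (addE H u v) (u :: p) by rewrite -e rot_cycle.
move: uc' sc' cc'; case: p e => [|x p'] e uc' sc' cc'.
  by move: sc; rewrite -sc'.
rewrite /= in cc'; move/andP: cc' => [hux hp].
move: uc'; rewrite cons_uniq in_cons negb_or => /andP[/andP[ux up'] /andP[xp' up'']].
have allp : all (predC1 u) (x :: p').
  apply/allP=> y yc /=; apply/eqP=> ey; move: yc; rewrite ey in_cons (negbTE up') orbF.
  by move/eqP=> ex; move: ux; rewrite ex eqxx.
move: hp; rewrite rcons_path => /andP[hp hl].
have hpH : path H x p' := sub_in_path (@addE_sub H u v) allp hp.
have lastin : last x p' \in x :: p' by apply: mem_last.
have lastu : last x p' != u.
  by apply/eqP=> el; move: lastin; rewrite el in_cons (negbTE up') orbF => /eqP ex; move: ux; rewrite ex eqxx.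
case: (eqVneq x v) => [exv|xv].
  right; exists (size (x :: p')); split; first by rewrite -sc' /=.
  right; exists (rcons p' u); split.
  - by rewrite size_rcons.
  - rewrite rcons_path -exv hpH /=.
    move: hl; rewrite /addE (negbTE lastu) /=.
    have sp : (1 <= size p')%N by move: sc; rewrite -sc' /=.
    have := last_neq sp xp'; rewrite exv => /negbTE ->; by rewrite /= !orbF.
  - by rewrite last_rcons.
have hux' : H u x.
  by move: hux; rewrite /addE eqxx (negbTE xv) /= (negbTE uv) /= !orbF.
case: (eqVneq (last x p') v) => [elv|lv].
  right; exists (size (x :: p')); split; first by rewrite -sc' /=.
  left; exists (x :: p'); split=> //=; by rewrite hux' hpH.
left; split=> //; rewrite -(rot_cycle i) e /= rcons_path hux' hpH /=.
by move: hl; rewrite /addE (negbTE lastu) (negbTE lv) /= !orbF.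
Qed.

End AddEdge.

Section Exist.
Variable n : nat.
Implicit Types G H : rel 'I_n.

Definition relS (S : {set 'I_n * 'I_n}) : rel 'I_n := fun a b => (a, b) \in S.

Definition QS G k (S : {set 'I_n * 'I_n}) :=
  [/\ symmetric (relS S), subrel (relS S) G & girth_ge (relS S) k.+2].

Lemma exists_girth_spanner G k : simple_graph G -> (1 <= k)%N ->
  exists H, is_spanner G H k /\ girth_ge H k.+2.
Proof.
move=> [sG iG] k1.
have Q0 : QS G k set0.
  split; first by move=> a b; rewrite /relS !inE.
    by move=> a b; rewrite /relS inE.
  move=> [|x [|y p]] [_ sc cc] //.
  by move: cc; rewrite /= /relS inE.
have [S [[sS subS gS] Smax]] := fin_max (fun S : {set 'I_n * 'I_n} => #|S|) Q0.
exists (relS S); split=> //.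
apply: spanner_of_edges; first by split.
move=> u v guv.
case: (boolP ((u, v) \in S)) => uvS.
  by exists 1; split=> //; apply: walk_edge.
have uv : u != v by apply/eqP=> e; move: guv; rewrite e iG.
pose S' := S :|: [set (u, v); (v, u)].
have ngirth : ~ girth_ge (relS S') k.+2.
  move=> g'; have Q' : QS G k S'.
    split=> //.
    - move=> a b; have := sS a b; rewrite /relS !inE !xpair_eqE => ->.
      by case: (a == u); case: (a == v); case: (b == u); case: (b == v); rewrite ?orbF ?orbT.
    - move=> a b; rewrite /relS !inE !xpair_eqE => /orP[/subS //|/orP[]] /andP[/eqP -> /eqP ->] //.
      by rewrite sG.
  have := Smax _ Q'.
  have : #|(u, v) |: S| <= #|S'|.
    by apply: subset_leq_card; apply/subsetP=> x; rewrite !inE => /orP[->|->]; rewrite ?orbT.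
  rewrite cardsU1 uvS /=; move=> h1 h2; move: (leq_trans h1 h2); by rewrite add1n ltnn.
have [c hc] : exists c, ~ (is_graph_cycle (relS S') c -> (k.+2 <= size c)%N).
  by apply: not_all_ex_not.
have [cyc lt] : is_graph_cycle (relS S') c /\ ~ (k.+2 <= size c)%N.
  split; first by apply: NNPP => h; apply: hc => h'; exfalso; exact: h h'.
  by move=> h; apply: hc.
have cyc' : is_graph_cycle (addE (relS S) u v) c.
  case: cyc => uc sc cc; split=> //; move: cc; apply: sub_cycle => a b.
  by rewrite /relS /addE !inE !xpair_eqE orbA.
case: (cycle_add uv cyc') => [/gS|[d [ltd [w|w]]]]; first by move=> h; exfalso; exact: lt h.
  by exists d; split=> //; move/negP: lt; rewrite -ltnNge; lia.
by exists d; split; [move/negP: lt; rewrite -ltnNge; lia | apply: walk_rev].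
Qed.

End Exist.

Section SD.
Variable T : finType.
Implicit Types A B : {set T}.
Definition sd A B := (A :\: B) :|: (B :\: A).

Lemma in_sd A B x : (x \in sd A B) = (x \in A) (+) (x \in B).
Proof. by rewrite !inE; case: (x \in A); case: (x \in B). Qed.

Lemma sdK A B : sd (sd A B) B = A.
Proof. by apply/setP=> x; rewrite !in_sd; case: (x \in A); case: (x \in B). Qed.

Lemma card_sd A B : #|sd A B| + 2 * #|A :&: B| = #|A| + #|B|.
Proof.
rewrite /sd cardsU.
have -> : (A :\: B) :&: (B :\: A) = set0.
  by apply/setP=> x; rewrite !inE; case: (x \in A); case: (x \in B).
rewrite cards0 subn0.
have h1 := cardsID B A; have h2 := cardsID A B; rewrite setIC in h2; lia.
Qed.

Lemma odd_card_sd A B : odd #|sd A B| = odd #|A| (+) odd #|B|.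
Proof.
have := congr1 odd (card_sd A B); rewrite !oddD /=.
by case: (odd #|A :&: B|); rewrite /= ?addbF ?addbT ?negbK => ->.
Qed.

Lemma exists_subset_card A m : (m <= #|A|)%N -> exists B, B \subset A /\ #|B| = m.
Proof.
elim: m => [|m IH] hm; first by exists set0; rewrite sub0set cards0.
have [B [sBA cB]] := IH (ltnW hm).
have : (0 < #|A :\: B|)%N.
  have := cardsID B A; have : (#|A :&: B| <= #|B|)%N by apply: subset_leq_card; apply: subsetIr.
  lia.
move/card_gt0P=> [x]; rewrite inE => /andP[xB xA].
exists (x |: B); split; first by rewrite subUset sub1set xA sBA.
by rewrite cardsU1 xB cB.
Qed.

End SD.

Section Edges.
Variable n : nat.
Implicit Types G H : rel 'I_n.
Notation E := ('I_n * 'I_n)%type.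

Definition Ed H : {set E} := [set p : E | (p.1 < p.2)%N && H p.1 p.2].

Definition inc (w : 'I_n) : {set E} := [set e : E | (e.1 == w) || (e.2 == w)].
Definition deg (X : {set E}) w := #|X :&: inc w|.
Definition oddv (X : {set E}) : {set 'I_n} := [set w | odd (deg X w)].

Lemma deg_sd X Y w : odd (deg (sd X Y) w) = odd (deg X w) (+) odd (deg Y w).
Proof.
rewrite /deg -odd_card_sd; congr (odd _); apply: eq_card.
by move=> e; rewrite !(in_sd, inE); case: (e \in X); case: (e \in Y); case: (_ || _).
Qed.

Lemma handshake (X : {set E}) : {in X, forall e : E, e.1 != e.2} ->
  \sum_w deg X w = 2 * #|X|.
Proof.
move=> hX.
have -> : \sum_w deg X w = \sum_w \sum_(e in X) ((e.1 == w) || (e.2 == w) : nat).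
  apply: eq_bigr => w _; rewrite /deg -sum1_card big_mkcond [RHS]big_mkcond /=.
  apply: eq_bigr => e _; rewrite !inE; by case: (e \in X); case: (_ || _).
rewrite exchange_big /= -sum1_card big_distrr /=; apply: eq_big => // e eX.
rewrite muln1.
have -> : \sum_w ((e.1 == w) || (e.2 == w) : nat) = #|[set e.1; e.2]|.
  rewrite -sum1_card [RHS]big_mkcond /=; apply: eq_bigr => w _.
  by rewrite !inE ![w == _]eq_sym; case: (_ || _).
by rewrite cards2 hX.
Qed.

End Edges.

Section Bound.
Variable n : nat.
Variable H : rel 'I_n.
Hypothesis sH : symmetric H.
Notation E := ('I_n * 'I_n)%type.

Lemma Ed_lt (X : {set E}) e : X \subset Ed H -> e \in X -> (e.1 < e.2)%N.
Proof. by move=> /subsetP sX /sX; rewrite inE => /andP[]. Qed.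

Lemma Ed_H (X : {set E}) e : X \subset Ed H -> e \in X -> H e.1 e.2.
Proof. by move=> /subsetP sX /sX; rewrite inE => /andP[]. Qed.

Lemma ord_neq (a b : 'I_n) : (a < b)%N -> a != b.
Proof. by move=> h; apply/eqP=> e; move: h; rewrite e ltnn. Qed.

Lemma even2 d : ~~ odd d -> (0 < d)%N -> (2 <= d)%N.
Proof. by case: d => [|[|d]]. Qed.

Lemma supp_bound (X : {set E}) : X \subset Ed H -> (forall w, ~~ odd (deg X w)) ->
  (#|[set w | (0 < deg X w)%N]| <= #|X|)%N.
Proof.
move=> sX ev.
have hs := handshake (fun e eX => ord_neq (Ed_lt sX eX)).
have h2 : (\sum_(w in [set w | (0 < deg X w)%N]) deg X w <= \sum_w deg X w)%N.
  by apply: (@sub_le_big _ _ leq leqnn (fun x y => leq_addr y x)).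
have : (\sum_(w in [set w | (0 < deg X w)%N]) 2 <=
        \sum_(w in [set w | (0 < deg X w)%N]) deg X w)%N.
  apply: leq_sum => w; rewrite inE => hw; exact: even2.
rewrite sum_nat_const hs in h2 *; lia.
Qed.

Definition Rx (X : {set E}) : rel 'I_n := fun a b => ((a, b) \in X) || ((b, a) \in X).

Lemma Rx_deg (X : {set E}) a b : Rx X a b -> (0 < deg X a)%N.
Proof.
move=> /orP[h|h]; apply/card_gt0P; [exists (a, b)|exists (b, a)]; by rewrite !inE h eqxx ?orbT.
Qed.

Lemma cycle_bound g (X : {set E}) : girth_ge H g -> X \subset Ed H ->
  (forall w, ~~ odd (deg X w)) -> X != set0 -> (g <= #|X|)%N.
Proof.
move=> gH sX ev /set0Pn [[a b] abX].
set R := Rx X.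
have Rsym : symmetric R by move=> u v; rewrite /R /Rx orbC.
have RH : subrel R H.
  move=> u v /orP[h|h]; first exact: (Ed_H sX h).
  by rewrite sH; exact: (Ed_H sX h).
pose P m := exists t rest, [/\ uniq (t :: rest), path R t rest & size rest = m].
have P1 : P 1.
  exists a, [:: b]; split=> //=.
    by rewrite inE andbT; apply: ord_neq; exact: (Ed_lt sX abX).
  by rewrite andbT /R /Rx abX.
have PB : forall m, P m -> (m <= n)%N.
  move=> m [t [rest [u _ <-]]].
  have := max_card (mem (t :: rest)); rewrite card_ord (card_uniqP u) /=; lia.
have [m [[t [rest [ur pr sr]]] Mx]] := nat_max P1 PB.
have m1 := Mx _ P1.
case: rest ur pr sr => [|x r'] ur pr sr; first by move: m1; rewrite -sr.
move: (pr) => /= /andP[Rtx pr'].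
pose e1 : E := if (t, x) \in X then (t, x) else (x, t).
have e1X : e1 \in X.
  by rewrite /e1; case: ifP => // h; move: Rtx; rewrite /R /Rx h.
have e1I : e1 \in X :&: inc t by rewrite inE e1X /inc inE /e1; case: ifP; rewrite /= eqxx ?orbT.
have d2 : (2 <= deg X t)%N by apply: even2 => //; apply/card_gt0P; exists e1.
have : (0 < #|(X :&: inc t) :\ e1|)%N.
  by move: d2; rewrite /deg (cardsD1 e1) e1I.
move=> hpos.
have [y [Rty yt yx]] : exists y, [/\ R t y, y != t & y != x].
  move/card_gt0P: hpos => [[p q]]; rewrite !inE /= => /andP[ne21 /andP[pqX pqt]].
  have lt2 : (p < q)%N := Ed_lt sX pqX.
  case: (eqVneq p t) => [ept|npt].
    subst p; exists q; split; first by rewrite /R /Rx pqX.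
      by rewrite eq_sym; apply: ord_neq.
    apply/eqP=> eqx; have {eqx} eqx : q = x :> ordinal n := eqx; subst q; move: ne21; by rewrite /e1 pqX eqxx.
  move: pqt; rewrite /= (negbTE npt) /= => /eqP eqt; have {eqt} eqt : q = t :> ordinal n := eqt; subst q.
  exists p; split; first by rewrite /R /Rx pqX orbT.
    exact: ord_neq.
  apply/eqP=> epx; have {epx} epx : p = x :> ordinal n := epx; subst p.
  have : (t, x) \notin X.
    by apply/negP=> tx; have := Ed_lt sX tx; rewrite /=; lia.
  by move/negbTE=> h; move: ne21; rewrite /e1 h eqxx.
case: (boolP (y \in x :: r')) => yin; last first.
  have : P m.+1.
    exists y, (t :: x :: r'); split; last by rewrite -sr.
    - by rewrite cons_uniq in_cons negb_or yt yin ur.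
    - by rewrite /= Rsym Rty Rtx pr'.
  by move/Mx; rewrite ltnn.
have [r1 [r2 er]] : exists r1 r2, x :: r' = r1 ++ y :: r2.
  by case/splitPr: yin => r1 r2; exists r1, r2.
rewrite er in ur pr.
have r1n : r1 != [::].
  apply/negP=> /eqP e; subst r1; case: er => exy _.
  by move: yx; rewrite exy eqxx.
set c := t :: rcons r1 y.
have uc : uniq c.
  move: ur; rewrite /c -cats1 -cat1s -(cat1s y r2) !catA cat_uniq.
  by rewrite cat1s => /andP[].
have sc : (3 <= size c)%N.
  by move: r1n; rewrite -size_eq0 /c /= size_rcons; case: (size r1).
have cR : cycle R c.
  rewrite /c /= !rcons_path; move: pr; rewrite cat_path /= => /andP[-> /andP[-> _]].
  by rewrite last_rcons Rsym Rty.
have gc : (g <= size c)%N by apply: gH; split=> //; exact: sub_cycle RH _ cR.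
apply: leq_trans gc _.
apply: leq_trans (supp_bound sX ev).
rewrite -(card_uniqP uc); apply: subset_leq_card; apply/subsetP=> z zc.
by rewrite inE; apply: (@Rx_deg X z (next c z)); exact: next_cycle cR zc.
Qed.

End Bound.

Section EB.
Variable n : nat.
Variable H : rel 'I_n.
Hypothesis sH : symmetric H.
Notation E := ('I_n * 'I_n)%type.

Lemma edge_bound g : girth_ge H g -> (4 * (n + 3) < 7 * g)%N -> (nedges H <= n + 2)%N.
Proof.
move=> gH hg; rewrite leqNgt; apply/negP => big.
have big' : (n + 3 <= #|Ed H|)%N by rewrite -[3]/(2.+1) addnS; exact: big.
have [F [sF cF]] := @exists_subset_card _ (Ed H) (n + 3) big'.
pose W := [set X in powerset F | [forall w, ~~ odd (deg X w)]].
have inW X : (X \in W) = (X \subset F) && [forall w, ~~ odd (deg X w)].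
  by rewrite inE powersetE.
clearbody W.
have sdW X Y : X \in W -> Y \in W -> sd X Y \in W.
  rewrite !inW => /andP[sX /forallP eX] /andP[sY /forallP eY].
  apply/andP; split.
    apply/subsetP=> e; rewrite in_sd; move/subsetP: sX => sX; move/subsetP: sY => sY.
    by case: (boolP (e \in X)) => [/sX //|_]; rewrite /= => /sY.
  apply/forallP=> w; rewrite deg_sd; move: (eX w) (eY w).
  by case: (odd (deg X w)); case: (odd (deg Y w)).
have WE X : X \in W -> X \subset Ed H.
  by rewrite inW => /andP[sX _]; apply: subset_trans sF.
have W8 : (8 <= #|W|)%N.
  pose pF := powerset F.
  pose fib Y := [set X in pF | oddv X == Y].
  have [Y hY] : exists Y, (8 <= #|fib Y|)%N.
    apply: NNPP => hn.
    have hall : forall Y, (#|fib Y| <= 7)%N.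
      by move=> Y; rewrite leqNgt; apply/negP => h; apply: hn; exists Y.
    have : #|pF| = \sum_(Y in powerset [set: 'I_n]) #|fib Y|.
      rewrite -sum1_card (partition_big (fun X => oddv X) (mem (powerset [set: 'I_n]))) /=.
        apply: eq_bigr => Y _; rewrite -sum1_card; apply: eq_bigl => X.
        by rewrite !inE.
      by move=> X _; rewrite powersetE subsetT.
    have : (\sum_(Y in powerset [set: 'I_n]) #|fib Y| <= \sum_(Y in powerset [set: 'I_n]) 7)%N.
      by apply: leq_sum => Y _.
    rewrite sum_nat_const card_powerset cardsT card_ord /pF card_powerset cF.
    move=> h1 h2; rewrite -h2 expnD in h1; move: h1; lia.
  have [X0 X0f] : exists X0, X0 \in fib Y.
    by apply/card_gt0P; apply: leq_trans hY.
  have sub : [set sd X X0 | X in fib Y] \subset W.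
    apply/subsetP=> Z /imsetP [X Xf ->].
    move: Xf X0f; rewrite !inE /pF ?powersetE => /andP[sX /eqP oX] /andP[sX0 /eqP oX0].
    rewrite inW; apply/andP; split.
      apply/subsetP=> e; rewrite in_sd; move/subsetP: sX => sX; move/subsetP: sX0 => sX0.
      by case: (boolP (e \in X)) => [/sX //|_]; rewrite /= => /sX0.
    apply/forallP=> w; rewrite deg_sd.
    have : (w \in oddv X) = (w \in oddv X0) by rewrite oX oX0.
    by rewrite !inE => ->; case: (odd _).
  apply: leq_trans hY _; apply: leq_trans (subset_leq_card sub).
  rewrite card_imset //; move=> X1 X2 e; by rewrite -(sdK X1 X0) e sdK.
have Wg X : X \in W -> X != set0 -> (g <= #|X|)%N.
  move=> XW; apply: (cycle_bound sH gH (WE _ XW)).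
  by move: XW; rewrite inW => /andP[_ /forallP].
have half e : (2 * #|[set X in W | e \in X]| <= #|W|)%N.
  have hsplit := cardsID [set X : {set E} | e \in X] W.
  have -> : [set X in W | e \in X] = W :&: [set X : {set E} | e \in X].
    by apply/setP=> X; rewrite !inE.
  case: (boolP (W :&: [set X : {set E} | e \in X] == set0)) => [/eqP ->|/set0Pn [X0]].
    by rewrite cards0.
  rewrite !inE => /andP[X0W eX0].
  have : (#|W :&: [set X : {set E} | e \in X]| <= #|W :\: [set X : {set E} | e \in X]|)%N.
    rewrite -(card_in_imset (f := fun X => sd X X0)).
      apply: subset_leq_card; apply/subsetP=> Z /imsetP [X].
      rewrite !inE => /andP[XW eX] ->; rewrite in_sd eX eX0 /=.
      by apply: sdW.
    by move=> X1 X2 _ _ e12; rewrite -(sdK X1 X0) e12 sdK.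
  lia.
have sumE : \sum_(X in W) #|X| = \sum_(e in F) #|[set X in W | e \in X]|.
  have -> : \sum_(X in W) #|X| = \sum_(X in W) \sum_(e in F) ((e \in X) : nat).
    apply: eq_bigr => X XW; rewrite -sum1_card [RHS]big_mkcond [LHS]big_mkcond /=.
    apply: eq_bigr => e _; move: XW; rewrite inW => /andP[/subsetP sX _].
    case: (boolP (e \in X)) => [/[dup] eX /sX -> //|eX]; by case: (e \in F).
  rewrite exchange_big /=; apply: eq_bigr => e _.
  rewrite -sum1_card [RHS]big_mkcond [LHS]big_mkcond /=; apply: eq_bigr => X _.
  by rewrite !inE; case: (X \in W); case: (e \in X).
have up : (2 * \sum_(X in W) #|X| <= (n + 3) * #|W|)%N.
  rewrite sumE big_distrr /=.
  have : (\sum_(e in F) 2 * #|[set X in W | e \in X]| <= \sum_(e in F) #|W|)%N.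
    by apply: leq_sum => e _; exact: half.
  by rewrite sum_nat_const cF mulnC.
have low : (g * (#|W| - 1) <= \sum_(X in W) #|X|)%N.
  have h1 : (\sum_(X in W :\ set0) #|X| <= \sum_(X in W) #|X|)%N.
    apply: (@sub_le_big _ _ leq leqnn (fun x y => leq_addr y x)) => X.
    by rewrite !inE => /andP[].
  have h2 : (\sum_(X in W :\ set0) g <= \sum_(X in W :\ set0) #|X|)%N.
    apply: leq_sum => X; rewrite !inE => /andP[X0 XW]; exact: Wg.
  rewrite sum_nat_const in h2.
  have h3 := cardsD1 set0 W.
  have : (#|W| - 1 <= #|W :\ set0|)%N by move: h3; case: (set0 \in W) => /=; lia.
  move=> h4; apply: leq_trans h1; apply: leq_trans h2; rewrite mulnC; exact: leq_mul.
set w := #|W| in W8 up low.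
set s := \sum_(X in W) #|X| in up low.
have : (8 * g * (w - 1) <= 4 * (n + 3) * w)%N.
  have := leq_mul (leqnn 4) (leq_trans (leq_mul (leqnn 2) low) up); lia.
have : (4 * (n + 3) * w < 7 * g * w)%N.
  rewrite -!(mulnC w) ltn_pmul2l //; lia.
nia.
Qed.

End EB.

Section Conn.
Variable n : nat.
Notation E := ('I_n * 'I_n)%type.

Lemma spanner_connected (G S : rel 'I_n) k :
  connected_graph G -> is_spanner G S k -> connected_graph S.
Proof.
move=> cG [_ sp] u v.
have /connectP [p pp lp] := cG u v.
have [d [dG _]] := @walk_dist n G u v (size p) (ex_intro _ p (And3 erefl pp (esym lp))).
have [d' [[[q [_ qp ql]] _] _]] := sp _ _ _ dG.
by apply/connectP; exists q.
Qed.

End Conn.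
Definition cut n (S : rel 'I_n) (C : {set 'I_n}) : {set 'I_n * 'I_n} :=
  [set e in Ed S | (e.1 \in C) != (e.2 \in C)].

Lemma conn_edgesS n' (S : rel 'I_n'.+1) : symmetric S -> connected_graph S ->
  (n'.+1 - 1 <= nedges S)%N.
Proof.
move=> sS cS.
pose D := powerset [set~ (ord0 : 'I_n'.+1)].
have inj : {in D &, injective (cut S)}.
  move=> C1 C2; rewrite !powersetE => s1 s2 ec.
  pose Z := sd C1 C2.
  have cZ : forall a b, S a b -> a \in Z -> b \in Z.
    move=> a b sab aZ; apply: NNPP => /negP bZ.
    pose e0 := if (a < b)%N then (a, b) else (b, a).
    have ne : a != b by apply/eqP=> eab; move: bZ; rewrite -eab aZ.
    have hba : ~~ (a < b)%N -> (b < a)%N.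
      move=> h; case: (ltngtP a b) h => // eab _; exfalso.
      by move: ne; rewrite (ord_inj eab) eqxx.
    have hE : e0 \in Ed S.
      rewrite /e0 inE; case: ifP => hab /=; first by rewrite hab sab.
      by rewrite hba ?hab // -sS sab.
    have hx : ((e0.1 \in C1) != (e0.2 \in C1)) != ((e0.1 \in C2) != (e0.2 \in C2)).
      move: aZ bZ; rewrite /Z !in_sd /e0; case: ifP => _ /=;
      by case: (a \in C1); case: (b \in C1); case: (a \in C2); case: (b \in C2).
    have : (e0 \in cut S C1) != (e0 \in cut S C2).
      by move: hE; rewrite !inE => -> /=.
    by rewrite ec eqxx.
  have Z0 : ord0 \notin Z.
    rewrite /Z in_sd; move/subsetP: s1 => /(_ ord0); move/subsetP: s2 => /(_ ord0).
    rewrite !inE eqxx /= => hA hB; case e1 : (ord0 \in C1); first by (have := hA e1) || (have := hB e1).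
    by case e2 : (ord0 \in C2); first by (have := hA e2) || (have := hB e2).
  have Ze : forall z, z \notin Z.
    move=> z; apply/negP=> zZ.
    have /connectP [p pp lp] := cS z ord0.
    suff : last z p \in Z by rewrite -lp (negbTE Z0).
    elim: p z zZ pp {lp} => [//|y p IH] z zZ /= /andP[szy pp].
    exact: IH (cZ _ _ szy zZ) pp.
  apply/setP=> x; have := Ze x; rewrite /Z in_sd.
  by case: (x \in C1); case: (x \in C2).
have := card_in_imset inj.
have sub : [set cut S C | C in D] \subset powerset (Ed S).
  apply/subsetP=> X /imsetP [C _ ->]; rewrite powersetE; apply/subsetP=> e.
  by rewrite inE => /andP[].
have := subset_leq_card sub.
rewrite card_powerset /D card_powerset cardsC1 card_ord => h1 h2.
rewrite h2 leq_exp2l // in h1; rewrite subn1; exact: h1.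
Qed.

Lemma conn_edges n (S : rel 'I_n) : symmetric S -> connected_graph S ->
  (n - 1 <= nedges S)%N.
Proof. by case: n S => [|n'] S; [|exact: conn_edgesS]. Qed.

Local Open Scope ring_scope.

Theorem corollary1p13 :
  exists (c beta : rat), [/\ 0 <= c, 0 <= beta &
    exists N : nat, forall n : nat, (N <= n)%N ->
      forall k : nat, 4%:R / 7%:R * n%:R + c < k%:R ->
        approx_good 2%:R beta n k].
Proof.
exists 0, 4%:R; split=> //; exists 7%N => n n7 k hk.
have hk' : (4 * n < 7 * k)%N by rewrite -(ltr_nat rat) !natrM; lra.
have k1 : (1 <= k)%N by lia.
move=> G sG cG.
have [H [spH gH]] := exists_girth_spanner sG k1.
have sH : symmetric H by case: spH => [[]].
have eb := edge_bound sH gH (_ : (4 * (n + 3) < 7 * k.+2)%N).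
have {}eb := eb ltac:(lia).
exists H; split=> // opt [[S [spS <-]] _].
have sS : symmetric S by case: spS => [[]].
have cS := conn_edges sS (spanner_connected cG spS).
have h1 : (nedges H)%:R <= (n + 2)%:R :> rat by rewrite ler_nat.
have h2 : (n - 1)%:R <= (nedges S)%:R :> rat by rewrite ler_nat.
have h3 : (n - 1)%:R = n%:R - 1 :> rat by rewrite natrB //; lia.
rewrite natrD in h1; rewrite h3 in h2; lra.
Qed.
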